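(* Let $G$ be a connected graph with $\delta(G)=1$, girth at least $15$, and $G\in\mathcal U$. If $s_1$ is a single star support vertex of $G$, then there is no double star support vertex $s$ of $G$ with $d_G(s_1,s)=3$.
   Context: All graphs are finite and simple. A set $P\subseteq V(G)$ is an open packing if no two distinct vertices of $P$ have a common neighbor; it is maximal if maximal under inclusion among open packings. $\rho^o(G)$ is the maximum size of an open packing and $\rho^o_L(G)$ the minimum size of a maximal open packing; $\mathcal U$ is the class of graphs with $\rho^o_L(G)=\rho^o(G)$. A leaf is a vertex of degree $1$; a support vertex is a vertex adjacent to at least one leaf; $S_G$ is the set of support vertices. A single star support vertex is a support vertex not adjacent to any other support vertex; a double star support vertex is a support vertex adjacent to another support vertex. *)

(* Defs.v *)
From mathcomp Require Import all_boot.
Set Implicit Arguments. Unset Strict Implicit. Unset Printing Implicit Defensive.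

Section Graph.
Variables (T : finType) (e : rel T).

Definition simple_graph := symmetric e /\ irreflexive e.

Definition nbhd (x : T) : {set T} := [set y | e x y].
Definition deg (x : T) : nat := #|nbhd x|.

Definition connected_graph := forall x y : T, connect e x y.

Definition min_degree_one := (exists x : T, deg x = 1) /\ (forall x : T, 1 <= deg x).

(* girth at least g: every cycle (distinct vertices v_1..v_k, k >= 3,
   consecutive ones adjacent and v_k adjacent to v_1) has length >= g.
   Acyclic graphs (infinite girth) satisfy it. *)
Definition girth_at_least (g : nat) :=
  forall s : seq T, uniq s -> 3 <= size s -> cycle e s -> g <= size s.

Definition walk_of_length (x y : T) (n : nat) :=
  exists s : seq T, [/\ size s = n, path e x s & last x s = y].

Definition dist_eq (x y : T) (n : nat) :=
  walk_of_length x y n /\ forall m, m < n -> ~ walk_of_length x y m.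

Definition open_packing (P : {set T}) : bool :=
  [forall x in P, forall y in P, (x != y) ==> [forall z, ~~ (e x z && e y z)]].

Definition maximal_open_packing (P : {set T}) : bool :=
  open_packing P && [forall Q : {set T}, (open_packing Q && (P \subset Q)) ==> (Q == P)].

Definition rho_o : nat := \max_(P : {set T} | open_packing P) #|P|.

Definition rho_oL : nat := \big[minn/#|T|]_(P : {set T} | maximal_open_packing P) #|P|.

Definition in_U := rho_oL = rho_o.

Definition leaf (x : T) := deg x = 1.
Definition support_vertex (s : T) := exists x, e s x /\ leaf x.
Definition single_star_support (s : T) :=
  support_vertex s /\ forall t, e s t -> ~ support_vertex t.
Definition double_star_support (s : T) :=
  support_vertex s /\ exists t, e s t /\ support_vertex t.

End Graph.

(* Main.v *)
Require Import Defs.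
From mathcomp Require Import all_boot zify.
From Stdlib Require Import Classical.
Set Implicit Arguments. Unset Strict Implicit. Unset Printing Implicit Defensive.

Section PU.
Variables (T : finType) (e : rel T).
Hypothesis esym : symmetric e.

Lemma rev_path_sym x l v : path e x (rcons l v) -> path e v (rev (x :: l)).
Proof.
move=> h; have := rev_path e x (rcons l v).
rewrite last_rcons belast_rcons => ->.
by rewrite (@eq_path _ _ e) // => a b; rewrite esym.
Qed.

Lemma PU g : girth_at_least e g -> forall n x p q, size p + size q <= n -> n < g ->
  uniq (x :: p) -> uniq (x :: q) -> path e x p -> path e x q -> last x p = last x q -> p = q.
Proof.
move=> gi; elim=> [|n IH] x p q.
  by case: p => [|? ?]; case: q => [|? ?].
case: p => [|u p']; case: q => [|u' q'] //.
- move=> _ _ _ /= /andP[xq _] _ _ /= E.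
  by move: (mem_last u' q'); rewrite -E (negbTE xq).
- move=> _ _ /= /andP[xp _] _ _ _ /= E.
  by move: (mem_last u p'); rewrite E (negbTE xp).
set p := u :: p'; set q := u' :: q' => sz ng up uq pp pq E.
have yp : last x p \in p by rewrite /p /= mem_last.
have yq : last x p \in q by rewrite E /q /= mem_last.
have hasq : has (mem q) p by apply/hasP; exists (last x p).
set i := find (mem q) p.
have ilt : i < size p by rewrite -has_find.
set v := nth x p i.
have vq : v \in q := nth_find x hasq.
have vp : v \in p by rewrite mem_nth.
have Ep : p = take i p ++ v :: drop i.+1 p by rewrite -drop_nth // cat_take_drop.
set j := index v q.
have jlt : j < size q by rewrite index_mem.
have Eq : q = take j q ++ v :: drop j.+1 q.
  by rewrite -{1}(nth_index x vq) -drop_nth // cat_take_drop.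
case: (boolP ((i == 0) && (j == 0))) => [/andP[/eqP i0 /eqP j0]|nij].
  have uv : u = v by rewrite /v i0.
  have u'v : u' = v by rewrite -(nth_index x vq) -/j j0.
  have pq' : p' = q'.
    apply: (IH u) => //.
    - by move: sz; rewrite /p /q /= addSn addnS ltnS => /ltnW.
    - exact: ltnW.
    - by case/andP: up.
    - by rewrite uv -u'v; case/andP: uq.
    - by case/andP: pp.
    - by rewrite uv -u'v; case/andP: pq.
    - by move: E; rewrite /p /q /= uv -u'v.
  by rewrite /p /q uv u'v pq'.
exfalso.
set c := take i p ++ v :: rev (take j q).
have up2 : uniq p by case/andP: up.
have uq2 : uniq q by case/andP: uq.
have xp : x \notin p by case/andP: up.
have xq : x \notin q by case/andP: uq.
have vtp : v \notin take i p.
  by move: up2; rewrite {1}Ep cat_uniq => /and3P[_ /hasPn H _]; exact: (H v (mem_head _ _)).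
have vtq : v \notin take j q.
  by move: uq2; rewrite {1}Eq cat_uniq => /and3P[_ /hasPn H _]; exact: (H v (mem_head _ _)).
have tpq : ~~ has (mem q) (take i p) by rewrite has_take // ltnn.
have ucyc : uniq (x :: c).
  rewrite /= /c mem_cat inE mem_rev !negb_or; apply/andP; split.
    apply/and3P; split.
    - by apply/negP => /mem_take; apply/negP.
    - by apply/eqP => xv; move: vp; rewrite -xv (negbTE xp).
    - by apply/negP => /mem_take; apply/negP.
  rewrite cat_uniq take_uniq //=; apply/and3P; split => //.
    rewrite negb_or vtp /=; apply/hasPn => z; rewrite mem_rev => /mem_take zq.
    apply/negP => zt; move/hasPn: tpq => /(_ z zt) /=; by rewrite zq.
  by rewrite mem_rev vtq.
  by rewrite rev_uniq take_uniq.
have pcyc : cycle e (x :: c).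
  rewrite /= /c rcons_cat /= -rev_cons cat_path /=.
  move: pp; rewrite {1}Ep cat_path /= => /and3P[-> -> _] /=.
  apply: rev_path_sym; rewrite rcons_path.
  by move: pq; rewrite {1}Eq cat_path /= => /and3P[-> -> _].
have := gi _ ucyc.
rewrite /c /= size_cat /= size_rev !size_take ilt jlt.
move=> H.
have h0 : 0 < i + j by rewrite addn_gt0 !lt0n -negb_and.
have h3 : 2 < (i + j.+1).+1 by rewrite addnS !ltnS.
have Hg := H h3 pcyc.
have h : (i + j.+1).+1 <= n.+1.
  apply: leq_trans sz; rewrite -addSn; exact: leq_add.
by have := leq_ltn_trans Hg (leq_ltn_trans h ng); rewrite ltnn.
Qed.
End PU.


Section Walks.
Variables (T : finType) (e : rel T).
Hypothesis esym : symmetric e.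
Hypothesis eirr : irreflexive e.

Notation W := (walk_of_length e).
Notation D := (dist_eq e).

Definition wl x y n := [exists s : n.-tuple T, path e x s && (last x s == y)].

Lemma wlP x y n : reflect (W x y n) (wl x y n).
Proof.
apply: (iffP existsP) => [[s /andP[p /eqP l]]|[s [sz p l]]].
  by exists s; split; rewrite ?size_tuple.
have sz' : size s == n by rewrite sz.
by exists (Tuple sz') => /=; rewrite p l eqxx.
Qed.

Lemma W0 x y : W x y 0 -> x = y.
Proof. by case=> [[|? ?] [//= _ _ ->]]. Qed.

Lemma W0r x : W x x 0.
Proof. by exists [::]; split. Qed.

Lemma Wrcons x v y n : W x v n -> e v y -> W x y n.+1.
Proof.
case=> s [sz p l] h; exists (rcons s y); split; rewrite ?size_rcons ?sz ?rcons_path ?p ?l ?h //.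
by rewrite last_rcons.
Qed.

Lemma Wcat x v y m j : W x v m -> W v y j -> W x y (m + j).
Proof.
case=> s [sz p l] [s' [sz' p' l']]; exists (s ++ s'); split.
- by rewrite size_cat sz sz'.
- by rewrite cat_path p l p'.
- by rewrite last_cat l l'.
Qed.

Lemma Wcons x u y n : e x u -> W u y n -> W x y n.+1.
Proof. by move=> h w; rewrite -add1n; apply: (Wcat _ w); apply: Wrcons (W0r x) h. Qed.

Lemma Wsym x y n : W x y n -> W y x n.
Proof.
elim: n x y => [|n IH] x y; first by move/W0 ->; apply: W0r.
case=> [[|u s] [//= sz /andP[h p] l]].
have := IH u y (ex_intro _ s (And3 (eq_add_S _ _ sz) p l)).
by move=> w; apply: Wrcons w _; rewrite esym.
Qed.

Lemma D_ex x v n : W x v n -> exists k, D x v k.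
Proof.
move=> w.
have ex : exists n, wl x v n by exists n; apply/wlP.
exists (ex_minn ex); case: ex_minnP => m /wlP wm H; split => // k km wk.
by have := H k (introT (wlP x v k) wk); rewrite leqNgt km.
Qed.

Lemma D_le x v k m : D x v k -> W x v m -> k <= m.
Proof. by case=> _ H w; rewrite leqNgt; apply/negP => /H. Qed.

Lemma D_uniq x v k k' : D x v k -> D x v k' -> k = k'.
Proof.
move=> d d'; apply/eqP; rewrite eqn_leq (D_le d d'.1) (D_le d' d.1) //.
Qed.

Lemma D_nbr x v v' k : D x v k -> e v v' -> exists k', [/\ D x v' k', k' <= k.+1 & k <= k'.+1].
Proof.
move=> d h; have w' := Wrcons d.1 h.
case: (D_ex w') => k' d'; exists k'; split => //; first exact: D_le d' w'.
apply: D_le d _; apply: Wrcons d'.1 _; by rewrite esym.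
Qed.

Lemma last_take_nth (x : T) (p : seq T) i : i <= size p -> last x (take i p) = nth x (x :: p) i.
Proof.
elim: p x i => [|u p IH] x [|i] //= hi; rewrite ?IH //.
by rewrite (set_nth_default x).
Qed.

Lemma D_nth x v k p : D x v k -> size p = k -> path e x p -> last x p = v ->
  forall i, i <= k -> D x (nth x (x :: p) i) i.
Proof.
move=> d sz pp lp i ik.
have w1 : W x (nth x (x :: p) i) i.
  exists (take i p); rewrite size_take sz -last_take_nth ?sz //.
  rewrite take_path //; split => //.
  by case: ltngtP ik => // -> .
have w2 : W (nth x (x :: p) i) v (k - i).
  exists (drop i p); rewrite size_drop sz -last_take_nth ?sz //; split => //.
  by move: pp; rewrite -{1}(cat_take_drop i p) cat_path => /andP[].
  by rewrite -last_cat cat_take_drop.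
split => // m mi wm.
have := D_le d (Wcat wm w2).
by move: mi ik; clear; lia.
Qed.

Lemma D_path x v k : D x v k -> exists p, [/\ size p = k, path e x p, last x p = v, uniq (x :: p) &
   forall z, z \in x :: p -> exists2 i, i <= k & D x z i /\ (i = k -> z = v)].
Proof.
move=> d; case: (d) => [[p [sz pp lp]] _]; exists p; split => //.
  apply/(uniqP x) => i j hi hj E.
  move: hi hj; rewrite !inE /= sz !ltnS => hi hj.
  have di := D_nth d sz pp lp hi; have dj := D_nth d sz pp lp hj.
  by rewrite E in di; apply: D_uniq di dj.
move=> z zin; exists (index z (x :: p)).
  by move: zin; rewrite -index_mem /= sz ltnS.
have hi : index z (x :: p) <= k by move: zin; rewrite -index_mem /= sz ltnS.
split; first by have := D_nth d sz pp lp hi; rewrite nth_index.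
move=> ik; rewrite -(nth_index x zin) ik -sz -lp.
by have := nth_last x (x :: p).
Qed.

Hypothesis gi : girth_at_least e 15.

Lemma L1 x v u u' k : D x v k.+1 -> e u v -> e u' v -> D x u k -> D x u' k -> k < 7 -> u = u'.
Proof.
move=> dv h h' du du' k7.
case: (D_path du) => p [sz pp lp up Hp].
case: (D_path du') => p' [sz' pp' lp' up' Hp'].
have nv : forall q, (forall z, z \in x :: q -> exists2 i, i <= k & D x z i /\ (i = k -> z = u)) ->
   v \notin x :: q.
  move=> q Hq; apply/negP => /Hq [i ik [di _]].
  by have := D_uniq dv di; move: ik; clear; lia.
have := @PU _ e esym _ gi (k.+1 + k.+1) x (rcons p v) (rcons p' v).
rewrite !size_rcons sz sz' leqnn.
have n15 : k.+1 + k.+1 < 15 by move: k7; clear; lia.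
move/(_ isT n15).
have U1 : uniq (x :: rcons p v) by rewrite -rcons_cons rcons_uniq up nv.
have U2 : uniq (x :: rcons p' v).
  rewrite -rcons_cons rcons_uniq up' andbT; apply/negP => /Hp' [i ik [di _]].
  by have := D_uniq dv di; move: ik; clear; lia.
move/(_ U1 U2).
rewrite !rcons_path pp pp' lp lp' h h' !last_rcons => /(_ isT isT erefl) Heq.
have E : p = p' := rcons_injl v Heq.
by rewrite -lp -lp' E.
Qed.

Lemma L2 x v v' k : D x v k -> D x v' k -> e v v' -> k < 7 -> False.
Proof.
move=> dv dv' h k7.
case: (D_path dv) => p [sz pp lp up Hp].
case: (D_path dv') => p' [sz' pp' lp' up' Hp'].
have n15 : k + k.+1 < 15 by move: k7; clear; lia.
have U2 : uniq (x :: rcons p' v).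
  rewrite -rcons_cons rcons_uniq up' andbT; apply/negP => /Hp' [i ik [di E]].
  have ki := D_uniq dv di; rewrite -ki in E.
  by move: h; rewrite (E erefl) eirr.
have := @PU _ e esym _ gi (k + k.+1) x p (rcons p' v).
rewrite size_rcons sz sz' leqnn => /(_ isT n15 up U2 pp).
rewrite rcons_path pp' lp' esym h last_rcons lp => /(_ isT erefl) /(congr1 size).
by rewrite size_rcons sz sz'; move/eqP; rewrite eqn_leq ltnn andbF.
Qed.
End Walks.


Section Swap.
Variables (T : finType) (e : rel T).

Lemma opE (P : {set T}) x y z : open_packing e P -> x \in P -> y \in P -> x != y -> e x z -> e y z -> False.
Proof.
move=> /forall_inP /(_ x) H xP yP xy hx hy.
move: (H xP) => /forall_inP /(_ y yP) /implyP /(_ xy) /forallP /(_ z).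
by rewrite hx hy.
Qed.

Lemma opI (P : {set T}) : (forall x y z, x \in P -> y \in P -> x != y -> e x z -> e y z -> False) ->
  open_packing e P.
Proof.
move=> H; apply/forall_inP => x xP; apply/forall_inP => y yP; apply/implyP => xy.
apply/forallP => z; apply/negP => /andP[hx hy]; exact: (H x y z).
Qed.

Lemma bigmin_le (I : finType) (Pr : pred I) (F : I -> nat) d j :
  Pr j -> \big[minn/d]_(i | Pr i) F i <= F j.
Proof.
move=> Pj; have : j \in index_enum I by rewrite mem_index_enum.
elim: (index_enum I) => // x r IH; rewrite inE big_cons => /orP[/eqP <-|jr].
  by rewrite Pj geq_minl.
by case: (Pr x); [rewrite geq_min IH ?orbT|exact: IH].
Qed.

Lemma swap (A X Y : {set T}) : in_U e -> open_packing e A -> X \subset A -> open_packing e Y ->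
 (forall y u v, y \in Y -> e y u -> e v u -> v != y ->
     v \in X \/ exists2 x, x \in A & (x != v) /\ exists z, e x z && e v z) ->
 (forall y, y \in Y -> exists2 x, x \in A & (x != y) /\ exists z, e x z && e y z) ->
 #|Y| <= #|X|.
Proof.
move=> inU opA XA opY Hb Hc.
pose F := [pred P : {set T} | open_packing e P && (A \subset P)].
have FA : F A by rewrite /F /= opA subxx.
case: (@arg_maxnP _ A F (fun P => #|P|) FA) => P /andP[opP AP] Pmax.
have maxP : maximal_open_packing e P.
  rewrite /maximal_open_packing opP /=; apply/forallP => Q; apply/implyP => /andP[opQ PQ].
  rewrite eq_sym eqEcard PQ /=; apply: Pmax; rewrite /F /= opQ.
  exact: subset_trans AP PQ.
have LP : rho_oL e <= #|P|.
  exact: bigmin_le.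
set Q := (P :\: X) :|: Y.
have disj : forall y, y \in Y -> y \notin P.
  move=> y yY; apply/negP => yP; case: (Hc y yY) => x xA [xy [z /andP[hx hy]]].
  exact: (opE opP (subsetP AP x xA) yP xy hx hy).
have opQ : open_packing e Q.
  have key : forall y v z, y \in Y -> v \in P :\: X -> y != v -> e y z -> e v z -> False.
    move=> y v z yY; rewrite inE => /andP[vX vP] yv hy hv.
    case: (Hb y z v yY hy hv); first by rewrite eq_sym.
      by rewrite (negbTE vX).
    case=> x xA [xv [z' /andP[hx hv']]].
    exact: (opE opP (subsetP AP x xA) vP xv hx hv').
  apply: opI => x y z; rewrite !in_setU => /orP[xP|xY] /orP[yP|yY] xy hx hy.
  - move: xP yP; rewrite !inE => /andP[_ xP] /andP[_ yP]; exact: (opE opP xP yP xy hx hy).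
  - by apply: (key y x z yY xP _ hy hx); rewrite eq_sym.
  - exact: (key x y z xY yP xy hx hy).
  - exact: (opE opY xY yY xy hx hy).
have LQ : #|Q| <= rho_o e by apply: (leq_bigmax_cond Q).
have cQ : #|Q| = #|P| - #|X| + #|Y|.
  rewrite /Q cardsU.
  have -> : (P :\: X) :&: Y = set0.
    apply/setP => y; rewrite !inE; apply/negP => /andP[/andP[_ yP] yY].
    by move: (disj y yY); rewrite yP.
  by rewrite cards0 subn0 cardsDS // (subset_trans XA AP).
have XP : #|X| <= #|P| by apply: subset_leq_card; exact: subset_trans XA AP.
move: inU; rewrite /in_U => E.
move: LP LQ cQ XP; rewrite E; clear; lia.
Qed.
End Swap.


Section Main.
Variables (T : finType) (e : rel T).
Hypothesis esym : symmetric e.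
Hypothesis eirr : irreflexive e.
Hypothesis gi : girth_at_least e 15.
Variable s1 : T.

Notation W := (walk_of_length e).
Notation D := (dist_eq e s1).

Lemma Wpath x p : path e x p -> W x (last x p) (size p).
Proof. by move=> h; exists p. Qed.

Lemma W1 x y : e x y -> W x y 1.
Proof. by move=> h; exists [:: y]; rewrite /= h. Qed.

Lemma W1e x y : W x y 1 -> e x y.
Proof. case=> [[|z [|? ?]]] [] //= _ h <-; by move: h; rewrite andbT. Qed.

Lemma Dz : D s1 0.
Proof. by split => //; apply: W0r. Qed.

Lemma D1 c : e s1 c -> D c 1.
Proof.
move=> h; split; first exact: W1.
by case=> // _ /W0 E; move: h; rewrite E eirr.
Qed.

Lemma D1e c : D c 1 -> e s1 c.
Proof. by case=> /W1e. Qed.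

Lemma Dmid v y m j : W s1 v m -> W v y j -> D y (m + j) -> D v m.
Proof.
move=> w1 w2 d; split => // m' hm' w'.
by have := D_le d (Wcat w' w2); move: hm'; clear; lia.
Qed.

Lemma Dne v v' k k' : D v k -> D v' k' -> k != k' -> v != v'.
Proof. by move=> d d' kk; apply/eqP => E; rewrite E in d; move/eqP: kk; apply; exact: D_uniq d d'. Qed.

Lemma Dn v v' k : D v k -> e v v' -> exists k', [/\ D v' k', k' <= k.+1 & k <= k'.+1].
Proof. exact: D_nbr. Qed.

Lemma leafU x y y' : leaf e x -> e x y -> e x y' -> y = y'.
Proof.
rewrite /leaf /deg => /eqP/cards1P [z Hz] h h'.
have : y \in nbhd e x by rewrite inE.
have : y' \in nbhd e x by rewrite inE.
by rewrite Hz !inE => /eqP -> /eqP ->.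
Qed.

Lemma second_nbr x y : e x y -> ~ leaf e x -> exists y', e x y' /\ y' != y.
Proof.
move=> h nl; case: (boolP [exists y', e x y' && (y' != y)]).
  by case/existsP => y' /andP[? ?]; exists y'.
rewrite negb_exists => /forallP H; exfalso; apply: nl.
rewrite /leaf /deg; apply/eqP/cards1P; exists y; apply/setP => z; rewrite !inE.
case: (eqVneq z y) => [->|zy]; first by rewrite h.
by move: (H z); rewrite zy andbT => /negbTE.
Qed.

Lemma cover x u v : e x u -> e v u -> v = x \/ (x != v /\ exists z, e x z && e v z).
Proof.
move=> h h'; case: (eqVneq x v) => [->|xv]; first by left.
by right; split => //; exists u; rewrite h h'.
Qed.

Lemma Par v u u' k : D v k.+1 -> e u v -> e u' v -> D u k -> D u' k -> k < 7 -> u = u'.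
Proof. exact: L1. Qed.

Lemma Intra v v' k : D v k -> D v' k -> e v v' -> k < 7 -> False.
Proof. exact: L2. Qed.


Lemma D0 v : D v 0 -> v = s1.
Proof. by case=> /W0. Qed.

Lemma Dbetween z k1 k2 v1 v2 : D v1 k1 -> e v1 z -> D v2 k2 -> e v2 z ->
  exists k, [/\ D z k, k <= k1.+1, k1 <= k.+1, k <= k2.+1 & k2 <= k.+1].
Proof.
move=> d1 h1 d2 h2; have [k [dk a1 a2]] := Dn d1 h1; have [k' [dk' b1 b2]] := Dn d2 h2.
have E := D_uniq dk dk'; subst k'; by exists k.
Qed.

Section Config.
Variables (a b s l1 l lt t : T).
Hypotheses (ha : e s1 a) (hb : e a b) (hs : e b s) (ds : D s 3).
Hypotheses (hl1 : e s1 l1) (lfl1 : leaf e l1) (hl : e s l) (lfl : leaf e l)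
  (ht : e s t) (hlt : e t lt) (lflt : leaf e lt).
Hypothesis inU : in_U e.

Lemma Da : D a 1.
Proof. apply: (Dmid (W1 ha) _ ds); exists [:: b; s]; by rewrite /= hb hs. Qed.

Lemma Db : D b 2.
Proof. apply: (@Dmid b s 2 1 _ (W1 hs) ds); exists [:: a; b]; by rewrite /= ha hb. Qed.

Lemma bpar x : e x b -> D x 1 -> x = a.
Proof. move=> h dx; exact: (Par Db h hb dx Da isT). Qed.

Lemma spar x : e x s -> D x 2 -> x = b.
Proof. move=> h dx; exact: (Par ds h hs dx Db isT). Qed.

Lemma caseA c w lw : e s1 c -> c != a -> e c w -> w != s1 -> e w lw -> leaf e lw -> False.
Proof.
move=> hc ca hw ws1 hlw lflw.
have Dc := D1 hc.
have Dw : D w 2.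
  have [k [dk k1 k2]] := Dn Dc hw.
  case: k dk k1 k2 => [|[|[|k]]] dk k1 k2 //.
  - by move: ws1; rewrite (D0 dk) eqxx.
  - by case: (Intra Dc dk hw isT).
have ncb : ~ e c b by move=> h; move: ca; rewrite (bpar h Dc) eqxx.
have t_s1 : t != s1.
  apply/eqP => E; move: ht; rewrite E esym => /W1 /(D_le ds).
  by [].
have wt : w != t.
  apply/eqP => E; apply: ncb; have ws : e w s by rewrite E esym.
  by rewrite -(spar ws Dw).
have ncs : forall z, e c z -> e s z -> False.
  move=> z h1 h2; have [k [dk k1 k2 k3 k4]] := Dbetween Dc h1 ds h2.
  have k2' : k = 2 by move: k1 k2 k3 k4; clear; lia.
  subst k; have zs : e z s by rewrite esym.
  by apply: ncb; rewrite -(spar zs dk).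
have opA : open_packing e [set c; s].
  apply: opI => x y z; rewrite !inE => /orP[/eqP->|/eqP->] /orP[/eqP->|/eqP->] xy h1 h2;
    try by rewrite eqxx in xy.
  - exact: ncs h1 h2.
  - exact: ncs h2 h1.
have Z1 : forall z, e l1 z -> z = s1 by move=> z h; apply: leafU lfl1 h _; rewrite esym.
have Zw : forall z, e lw z -> z = w by move=> z h; apply: leafU lflw h _; rewrite esym.
have Zt : forall z, e lt z -> z = t by move=> z h; apply: leafU lflt h _; rewrite esym.
have K : forall u v z : T, u != v -> z = u -> z = v -> False.
  by move=> u v z uv -> E; move: uv; rewrite E eqxx.
have opY : open_packing e [set l1; lw; lt].
  apply: opI => x y z; rewrite !inE => /orP[/orP[/eqP->|/eqP->]|/eqP->] /orP[/orP[/eqP->|/eqP->]|/eqP->] xy h1 h2;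
    try by rewrite eqxx in xy.
  - exact: K ws1 (Zw _ h2) (Z1 _ h1).
  - exact: K t_s1 (Zt _ h2) (Z1 _ h1).
  - exact: K ws1 (Zw _ h1) (Z1 _ h2).
  - exact: K wt (Zw _ h1) (Zt _ h2).
  - exact: K t_s1 (Zt _ h1) (Z1 _ h2).
  - exact: K wt (Zw _ h2) (Zt _ h1).
have Hcov : forall x u v, x \in [set c; s] -> e x u -> e v u ->
    v \in [set c; s] \/ exists2 x', x' \in [set c; s] & (x' != v) /\ exists z, e x' z && e v z.
  move=> x u v xA h1 h2; case: (cover h1 h2) => [->|[xv [z hz]]]; first by left.
  by right; exists x => //; split => //; exists z.
have cA : c \in [set c; s] by rewrite !inE eqxx.
have sA : s \in [set c; s] by rewrite !inE eqxx orbT.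
have := @swap _ e [set c; s] [set c; s] [set l1; lw; lt] inU opA (subxx _) opY.
have cs1 : e c s1 by rewrite esym.
have cl1 : c != l1 by apply/eqP => E; move: hw; rewrite E => /Z1 E'; move: ws1; rewrite E' eqxx.
have clw : c != lw by apply/eqP => E; move: cs1; rewrite E => /Zw E'; move: ws1; rewrite E' eqxx.
have slt : s != lt.
  apply/eqP => E.
  have bt : b = t by apply: Zt; rewrite -E esym.
  have lt' : l = t by apply: Zt; rewrite -E.
  have lb : l = b by rewrite lt' bt.
  have la : e l a by rewrite lb esym.
  have ls : e l s by rewrite esym.
  have as' := leafU lfl la ls; move: ds; rewrite -as' => /D_uniq /(_ Da).
  by [].
move=> H.
have HB : forall y u v, y \in [set l1; lw; lt] -> e y u -> e v u -> v != y ->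
    v \in [set c; s] \/ exists2 x', x' \in [set c; s] & (x' != v) /\ exists z, e x' z && e v z.
  move=> y u v yY h1 h2 _; rewrite !inE in yY.
  case/orP: yY => [/orP[/eqP E|/eqP E]|/eqP E]; subst y.
  + by apply: (Hcov c u) => //; rewrite (Z1 _ h1).
  + by apply: (Hcov c u) => //; rewrite (Zw _ h1).
  + by apply: (Hcov s u) => //; rewrite (Zt _ h1).
have HC : forall y, y \in [set l1; lw; lt] ->
    exists2 x', x' \in [set c; s] & (x' != y) /\ exists z, e x' z && e y z.
  move=> y yY; rewrite !inE in yY.
  case/orP: yY => [/orP[/eqP E|/eqP E]|/eqP E]; subst y.
  + by exists c => //; split => //; exists s1; rewrite cs1 esym.
  + by exists c => //; split => //; exists w; rewrite hw esym.
  + by exists s => //; split => //; exists t; rewrite ht esym.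
move: (H HB HC).
have -> : [set l1; lw; lt] = l1 |: [set lw; lt] by apply/setP => x; rewrite !inE orbA.
rewrite (cardsU1 l1) (cards2 lw) (cards2 c) !inE negb_or.
have l1lw : l1 != lw by apply/eqP => E; move: hlw; rewrite -E esym => /Z1 E'; move: ws1; rewrite E' eqxx.
have l1lt : l1 != lt by apply/eqP => E; move: hlt; rewrite -E esym => /Z1 E'; move: t_s1; rewrite E' eqxx.
have lwlt : lw != lt by apply/eqP => E; move: hlt; rewrite -E esym => /Zw E'; move: wt; rewrite E' eqxx.
rewrite l1lw l1lt lwlt /=.
by case: (c != s).
Qed.

Lemma caseB : (forall c w, e s1 c -> c != a -> e c w -> w != s1 -> ~ support_vertex e w) ->
  (forall t, e s1 t -> ~ support_vertex e t) -> False.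
Proof.
move=> nA ss.
have Dab := Da; have Dbb := Db.
have ns1s : ~ e s1 s by move=> /W1 /(D_le ds).
pose Ws := [set w | [exists c, [&& e s1 c, c != a, e c w & w != s1]]].
pose pz w z := [exists u, [&& e w u, e u z, z != w, u != s1 & ~~ e s1 u]].
pose zf w := odflt w [pick z | pz w z].
have Wfacts : forall w, w \in Ws -> exists c, [/\ e s1 c, c != a, e c w, w != s1 & D w 2].
  move=> w; rewrite inE => /existsP [c /and4P[hc ca hw ws1]].
  have Dc := D1 hc.
  have Dw : D w 2.
    have [k [dk k1 k2]] := Dn Dc hw.
    case: k dk k1 k2 => [|[|[|k]]] dk k1 k2 //.
    - by move: ws1; rewrite (D0 dk) eqxx.
    - by case: (Intra Dc dk hw isT).
  by exists c.
have zfP : forall w, w \in Ws -> pz w (zf w).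
  move=> w wW; rewrite /zf; case: pickP => [z //|none]; exfalso.
  have [c [hc ca hw ws1 Dw]] := Wfacts w wW; have Dc := D1 hc.
  have nlw : ~ leaf e w by move=> lf; apply: (ss c hc); exists w.
  have hwc : e w c by rewrite esym.
  have [u [hu uc]] := second_nbr hwc nlw.
  have nlu : ~ leaf e u by move=> lf; apply: (nA c w hc ca hw ws1); exists u.
  have huw : e u w by rewrite esym.
  have [z [hz zw]] := second_nbr huw nlu.
  have us1 : u != s1.
    apply/eqP => E; move: hu; rewrite E esym => /D1 /D_uniq /(_ Dw).
    by [].
  have nsu : ~~ e s1 u.
    apply/negP => /D1 Du; move: uc; by rewrite (Par Dw huw hw Du Dc isT) eqxx.
  move: (none z); rewrite /pz => /negbT/negP; apply; apply/existsP; exists u.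
  by rewrite hu hz zw us1 nsu.
have zD : forall w, w \in Ws -> exists u, [/\ e w u, e u (zf w), zf w != w, D u 3 & D (zf w) 4].
  move=> w wW; have [c [hc ca hw ws1 Dw]] := Wfacts w wW; have Dc := D1 hc.
  move: (zfP w wW) => /existsP [u /and5P[hu huz zw us1 nsu]].
  have Du : D u 3.
    have [k [dk k1 k2]] := Dn Dw hu.
    case: k dk k1 k2 => [|[|[|[|k]]]] dk k1 k2 //.
    - by move: nsu; rewrite (D1e dk).
    - by case: (Intra Dw dk hu isT).
  have Dz4 : D (zf w) 4.
    have [k [dk k1 k2]] := Dn Du huz.
    case: k dk k1 k2 => [|[|[|[|[|k]]]]] dk k1 k2 //.
    - have hwu : e w u by [].
      have hzu : e (zf w) u by rewrite esym.
      by move: zw; rewrite (Par Du hzu hwu dk Dw isT) eqxx.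
    - by case: (Intra Du dk huz isT).
  by exists u.
have bz : forall w m, w \in Ws -> e b m -> e (zf w) m -> False.
  move=> w m wW hbm hzm.
  have [c [hc ca hw ws1 Dw]] := Wfacts w wW; have Dc := D1 hc.
  have [u [hu huz zw Du Dz4]] := zD w wW.
  have [k [dk k1 k2 k3 k4]] := Dbetween Dbb hbm Dz4 hzm.
  have k3' : k = 3 by move: k1 k2 k3 k4; clear; lia.
  subst k.
  have hmz : e m (zf w) by rewrite esym.
  have mu := Par Dz4 hmz huz dk Du isT; subst m.
  have hbu : e b u by [].
  have bw := Par Du hbu hu Dbb Dw isT; subst w.
  by move: ca; rewrite (bpar hw Dc) eqxx.
have zz : forall w w' m, w \in Ws -> w' \in Ws -> zf w != zf w' -> e (zf w) m -> e (zf w') m -> False.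
  move=> w w' m wW w'W zne h1 h2.
  have [c [hc ca hw ws1 Dw]] := Wfacts w wW; have Dc := D1 hc.
  have [c' [hc' ca' hw' ws1' Dw']] := Wfacts w' w'W.
  have [u [hu huz zw Du Dz4]] := zD w wW.
  have [u' [hu' huz' zw' Du' Dz4']] := zD w' w'W.
  have [k [dk k1 k2 k3 k4]] := Dbetween Dz4 h1 Dz4' h2.
  case: k dk k1 k2 k3 k4 => [|[|[|[|[|[|k]]]]]] dk k1 k2 k3 k4 //.
  - have hm1 : e m (zf w) by rewrite esym.
    have hm2 : e m (zf w') by rewrite esym.
    have E1 := Par Dz4 hm1 huz dk Du isT.
    have E2 := Par Dz4' hm2 huz' dk Du' isT.
    subst u u'.
    have E3 := Par Du hu hu' Dw Dw' isT; subst w'.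
    by move: zne; rewrite eqxx.
  - by case: (Intra Dz4 dk h1 isT).
  - by move: zne; rewrite (Par dk h1 h2 Dz4 Dz4' isT) eqxx.
pose A := b |: (zf @: Ws).
have opA : open_packing e A.
  apply: opI => x y z; rewrite !in_setU1 => /orP[/eqP->|/imsetP[w wW ->]] /orP[/eqP->|/imsetP[w' w'W ->]] xy h1 h2.
  - by move: xy; rewrite eqxx.
  - exact: bz w' z w'W h1 h2.
  - exact: bz w z wW h2 h1.
  - exact: zz w w' z wW w'W xy h1 h2.
have bA : b \in A by rewrite /A in_setU1 eqxx.
have Zl : forall z, e l z -> z = s by move=> z h; apply: leafU lfl h _; rewrite esym.
have opY : open_packing e [set l; s1].
  apply: opI => x y z; rewrite !inE => /orP[/eqP->|/eqP->] /orP[/eqP->|/eqP->] xy h1 h2;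
    try by rewrite eqxx in xy.
  - by apply: ns1s; rewrite -(Zl _ h1).
  - by apply: ns1s; rewrite -(Zl _ h2).
have Hcov : forall u v, e b u -> e v u ->
    v \in [set b] \/ exists2 x', x' \in A & (x' != v) /\ exists z, e x' z && e v z.
  move=> u v h1 h2; case: (cover h1 h2) => [->|[xv [z hz]]]; first by left; rewrite inE.
  by right; exists b => //; split => //; exists z.
have HB : forall y u v, y \in [set l; s1] -> e y u -> e v u -> v != y ->
    v \in [set b] \/ exists2 x', x' \in A & (x' != v) /\ exists z, e x' z && e v z.
  move=> y u v yY h1 h2 vy; rewrite !inE in yY.
  case/orP: yY => [/eqP E|/eqP E]; subst y.
  - by apply: (Hcov u) => //; rewrite (Zl _ h1).
  - case: (eqVneq u a) => [E|ua].
      by subst u; apply: (Hcov a) => //; rewrite esym.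
    have vW : v \in Ws.
      by rewrite inE; apply/existsP; exists u; rewrite h1 ua esym h2 vy.
    have [u' [hu huz zw Du Dz4]] := zD v vW.
    right; exists (zf v); first by rewrite /A in_setU1; apply/orP; right; apply: imset_f.
    by split => //; exists u'; rewrite hu esym huz.
have HC : forall y, y \in [set l; s1] ->
    exists2 x', x' \in A & (x' != y) /\ exists z, e x' z && e y z.
  move=> y yY; rewrite !inE in yY.
  case/orP: yY => [/eqP E|/eqP E]; subst y.
  - exists b => //; split; last by exists s; rewrite hs esym.
    apply/eqP => E; have la : e l a by rewrite -E esym.
    have := Zl _ la => as'; move: ds; rewrite -as' => /D_uniq /(_ Dab).
    by [].
  - exists b => //; split; last by exists a; rewrite esym hb ha.
    exact: Dne Dbb Dz isT.
have := @swap _ e A [set b] [set l; s1] inU opA _ opY HB HC.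
rewrite sub1set bA cards2 cards1 => /(_ isT).
case: eqVneq => [E _|//]; apply: ns1s; by rewrite -E esym.
Qed.
End Config.
End Main.


Theorem claim2 (T : finType) (e : rel T) :
  simple_graph e ->
  connected_graph e ->
  min_degree_one e ->
  girth_at_least e 15 ->
  in_U e ->
  forall s1 : T, single_star_support e s1 ->
  ~ (exists s : T, double_star_support e s /\ dist_eq e s1 s 3).
Proof.
move=> [esym eirr] _ _ gi inU s1 [[l1 [hl1 lfl1]] ss]
  [s [[[l [hl lfl]] [t [ht [lt [hlt lflt]]]]] ds]].
case: (ds) => [[p [sz pp lp]] _].
case: p sz pp lp => [|a [|b [|s' [|? ?]]]] //= _ /and4P[ha hb hs' _] ls.
subst s'.
case: (classic (exists c w, [/\ e s1 c, c != a, e c w, w != s1 & support_vertex e w])).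
  case=> c [w [hc ca hw ws1 [lw [hlw lflw]]]].
  exact: (caseA esym eirr gi ha hb hs' ds hl1 lfl1 hl lfl ht hlt lflt inU hc ca hw ws1 hlw lflw).
move=> nA; apply: (caseB esym eirr gi ha hb hs' ds hl lfl inU _ ss).
move=> c w hc ca hw ws1 sw; apply: nA; by exists c, w.
Qed.
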